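(* Let $Q$ be a finite acyclic quiver, $\mathbf d\in\mathbb{N}Q_0$, $0\neq\Theta\in(\mathbb{Z}Q_0)^*$ with $\Theta(\mathbf d)=0$, and $0\ne\mathbf n\in\mathbb{N}Q_0$. Let $\kappa$ be a positive functional and $C$ a positive integer with $\kappa(\mathbf d)<C\cdot\gcd(\Theta)$, and form $(\widehat Q,\widehat{\mathbf d},\widehat\Theta)$ as below. Then $\widehat{\mathbf d}$ is $\widehat\Theta$-coprime, and a representation $(V,f)$ of $\widehat Q$ of dimension vector $\widehat{\mathbf d}$ is $\widehat\Theta$-semistable if and only if $V$ is $\Theta$-semistable and $\Theta(\mathbf{dim}U)<0$ for every proper subrepresentation $U\subsetneq V$ containing the image of $f$, i.e. satisfying $\mathrm{Im}(f_i)\subseteq U_i\subseteq V_i$ for all $i\in Q_0$.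
   Context: Quiver representations, subrepresentations, dimension vectors, and $\Theta$-semistability for $\Theta(\mathbf{dim}V)=0$ (namely $\Theta(\mathbf{dim}U)\le 0$ for all subrepresentations $U$) are as usual. A positive functional is $\kappa\in(\mathbb{Z}Q_0)^*$ with $\kappa(\mathbf e)>0$ for all $0\ne\mathbf e\in\mathbb{N}Q_0$; $\gcd(\Theta)$ is the gcd of the coordinates $\Theta_i$. A dimension vector $\mathbf d$ is $\Theta$-coprime if $\Theta(\mathbf e)\ne0$ for all $0\ne\mathbf e\le\mathbf d$, $\mathbf e\neq\mathbf d$ (componentwise). Framing construction: $\widehat Q$ has vertices $Q_0\cup\{0\}$, the arrows of $Q$, and $n_i$ additional arrows $0\to i$ for each $i\in Q_0$; $\widehat d_i=d_i$ for $i\in Q_0$ and $\widehat d_0=1$; $\widehat\Theta_i=C\Theta_i-\kappa_i$ for $i\in Q_0$ and $\widehat\Theta_0=\kappa(\mathbf d)$. A representation of $\widehat Q$ of dimension vector $\widehat{\mathbf d}$ is identified with a pair $(V,f)$ where $V$ is a representation of $Q$ of dimension vector $\mathbf d$ and $f=(f_i:\mathbb{C}^{n_i}\to V_i)_{i\in Q_0}$. *)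

(* Defs.v *)
(* Quiver representations over C, modelled as R[i] for an
   arbitrary R : realType (every realType is a model of the real numbers). *)
From HB Require Import structures.
From mathcomp Require Import all_boot all_order all_algebra.
From mathcomp Require Import reals.
From mathcomp Require Import complex.

Set Implicit Arguments.
Unset Strict Implicit.
Unset Printing Implicit Defensive.

Import Order.TTheory GRing.Theory Num.Theory.
Local Open Scope ring_scope.

Record quiver := Quiver {
  vertex : finType;
  arrow : finType;
  src : arrow -> vertex;
  tgt : arrow -> vertex }.

Definition acyclic (Q : quiver) : Prop :=
  forall (a : arrow Q) (p : seq (arrow Q)),
    path (fun x y => tgt x == src y) a p -> tgt (last a p) != src a.

Definition dimvec (Q : quiver) := vertex Q -> nat.
Definition functional (Q : quiver) := vertex Q -> int.

Definition evalf (Q : quiver) (Th : functional Q) (e : dimvec Q) : int :=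
  \sum_(i : vertex Q) Th i * (e i)%:Z.

Definition gcdf (Q : quiver) (Th : functional Q) : nat :=
  \big[gcdn/0%N]_(i : vertex Q) `|Th i|%N.

Definition positive_functional (Q : quiver) (k : functional Q) : Prop :=
  forall e : dimvec Q, e <> (fun _ => 0%N) -> 0 < evalf k e.

Definition coprime_dimvec (Q : quiver) (Th : functional Q) (d : dimvec Q)
  : Prop :=
  forall e : dimvec Q, e <> (fun _ => 0%N) -> (forall i, (e i <= d i)%N) ->
    e <> d -> evalf Th e != 0.

(* A representation of Q of dimension vector d over K: V_i = K^{d_i}
   (row vectors), V_a : K^{d (src a)} -> K^{d (tgt a)} acting on the right. *)
Definition rep (K : fieldType) (Q : quiver) (d : dimvec Q) :=
  forall a : arrow Q, 'M[K]_(d (src a), d (tgt a)).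

(* A subrepresentation: subspaces U_i <= K^{d_i} (given as row spaces of
   square matrices) stable under all arrows. *)
Definition subrep (K : fieldType) (Q : quiver) (d : dimvec Q) (V : rep K d)
  (U : forall i : vertex Q, 'M[K]_(d i)) : Prop :=
  forall a : arrow Q, (U (src a) *m V a <= U (tgt a))%MS.

Definition dim_sub (K : fieldType) (Q : quiver) (d : dimvec Q)
  (U : forall i : vertex Q, 'M[K]_(d i)) : dimvec Q :=
  fun i => \rank (U i).

Definition semistable (K : fieldType) (Q : quiver) (Th : functional Q)
  (d : dimvec Q) (V : rep K d) : Prop :=
  forall U : forall i, 'M[K]_(d i), subrep V U -> evalf Th (dim_sub U) <= 0.

(* Framed quiver \hat Q: vertices Q_0 + {0} (0 is None), arrows of Q plus
   n_i arrows 0 -> i. *)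
Definition framed_quiver (Q : quiver) (n : dimvec Q) : quiver :=
  @Quiver (option (vertex Q)) (arrow Q + {i : vertex Q & 'I_(n i)})%type
    (fun a => match a with inl a' => Some (src a') | inr _ => None end)
    (fun a => match a with inl a' => Some (tgt a') | inr x => Some (tag x) end).

Definition framed_dim (Q : quiver) (n : dimvec Q) (d : dimvec Q)
  : dimvec (@framed_quiver Q n) :=
  fun i => match i with Some j => d j | None => 1%N end.

Arguments framed_dim {Q} n d _.

Definition framed_theta (Q : quiver) (n : dimvec Q) (d : dimvec Q)
  (Th kappa : functional Q) (C : nat) : functional (@framed_quiver Q n) :=
  fun i => match i with
           | Some j => (C%:Z * Th j - kappa j)%R
           | None => evalf kappa d
           end.

Arguments framed_theta {Q} n d Th kappa C _.

(* The representation (V, f) of \hat Q: f_i : K^{n_i} -> V_i is the matrix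
   whose k-th row is the image of the k-th basis vector, i.e. the map along
   the k-th arrow 0 -> i (a 1 x d_i matrix). *)
Definition framed_rep (K : fieldType) (Q : quiver) (n d : dimvec Q)
  (V : rep K d) (f : forall i : vertex Q, 'M[K]_(n i, d i))
  : rep K (@framed_dim Q n d) :=
  fun a => match a as a0 return
       'M[K]_(@framed_dim Q n d (@src (@framed_quiver Q n) a0),
              @framed_dim Q n d (@tgt (@framed_quiver Q n) a0)) with
     | inl a' => V a'
     | inr (existT i k) => row k (f i)
     end.

(* Main.v *)
Require Import Defs.
From HB Require Import structures.
From mathcomp Require Import all_boot all_order all_algebra.
From mathcomp Require Import reals.
From mathcomp Require Import complex.
From Stdlib Require Import FunctionalExtensionality.
From mathcomp Require Import zify.
Set Implicit Arguments.
Unset Strict Implicit.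
Unset Printing Implicit Defensive.
Import Order.TTheory GRing.Theory Num.Theory.
Local Open Scope ring_scope.

Lemma sum_option (T : finType) (F : option T -> int) :
  \sum_(o : option T) F o = F None + \sum_(j : T) F (Some j).
Proof.
rewrite (bigD1 None) //=; congr (_ + _).
rewrite (reindex_omap Some id) /=; last by case.
idtac.
apply: eq_bigl => j /=. by rewrite eqxx.
Qed.

Lemma evalf_framed (Q : quiver) (n d : dimvec Q) Th kappa C
  (e : dimvec (framed_quiver n)) :
  evalf (framed_theta n d Th kappa C) e =
  C%:Z * evalf Th (fun j => e (Some j)) - evalf kappa (fun j => e (Some j))
  + evalf kappa d * (e None)%:Z.
Proof.
rewrite /evalf /= sum_option /= addrC; congr (_ + _).
rewrite mulr_sumr -sumrN -big_split /=; apply: eq_bigr => j _.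
by rewrite /framed_theta mulrBl mulrA.
Qed.

Lemma gcd_le (Q : quiver) (Th : functional Q) (e : dimvec Q) :
  evalf Th e != 0 -> (gcdf Th <= `|evalf Th e|)%N.
Proof.
move=> Ht; apply: dvdn_leq; first by rewrite absz_gt0.
have : ((gcdf Th)%:Z %| evalf Th e)%Z.
  rewrite /evalf; apply: (big_ind (fun x => ((gcdf Th)%:Z %| x)%Z)).
  - exact: dvdz0.
  - by move=> x y /dvdzP[p ->] /dvdzP[q ->]; rewrite -mulrDl dvdz_mull.
  - move=> i _; apply: dvdz_mulr; rewrite dvdzE /=.
    exact: (biggcdn_inf i).
by rewrite dvdzE.
Qed.

Lemma evalfD (Q : quiver) (k : functional Q) (a b : dimvec Q) :
  evalf k (fun i => a i + b i)%N = evalf k a + evalf k b.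
Proof. by rewrite /evalf -big_split; apply: eq_bigr => i _; rewrite PoszD mulrDr. Qed.

Lemma kappa_pos (Q : quiver) k (e : dimvec Q) : positive_functional k ->
  (exists i, e i <> 0%N) -> 0 < evalf k e.
Proof. by move=> Hk [i Hi]; apply: Hk => E; apply: Hi; rewrite E. Qed.

Lemma kappa_ge0 (Q : quiver) k (e : dimvec Q) : positive_functional k ->
  0 <= evalf k e.
Proof.
move=> Hk; case: (boolP [exists i, e i != 0%N]) => [/existsP [i /eqP Hi]|].
  by apply/ltW/kappa_pos => //; exists i.
rewrite negb_exists => /forallP H; rewrite /evalf big1 // => i _.
by rewrite (eqP (negbNE (H i))) mulr0.
Qed.

Lemma kappa_split (Q : quiver) k (e d : dimvec Q) : (forall i, e i <= d i)%N ->
  evalf k d = evalf k e + evalf k (fun i => d i - e i)%N.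
Proof. by move=> H; rewrite -evalfD /evalf; apply: eq_bigr => i _; rewrite subnKC. Qed.

Definition hatU (K : fieldType) (Q : quiver) (n d : dimvec Q)
  (U : forall i, 'M[K]_(d i)) (b : bool)
  : forall o : vertex (framed_quiver n), 'M[K]_(framed_dim n d o) :=
  fun o => match o return 'M[K]_(framed_dim n d o) with
           | Some j => U j | None => if b then 1%:M else 0 end.

Lemma subrep_hat (K : fieldType) (Q : quiver) (n d : dimvec Q) (V : rep K d)
  (f : forall i : vertex Q, 'M[K]_(n i, d i)) U (b : bool) :
  subrep V U -> (b -> forall i, (f i <= U i)%MS) ->
  subrep (framed_rep V f) (hatU (n:=n) U b).
Proof.
move=> HU Hf [a|[i k]] /=; first exact: HU.
case: b Hf => Hf /=.
  by rewrite mul1mx; apply: submx_trans (row_sub k (f i)) (Hf isT i).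
by rewrite mul0mx sub0mx.
Qed.

Lemma evalf_hat (K : fieldType) (Q : quiver) (n d : dimvec Q) Th kappa C
  (U : forall i, 'M[K]_(d i)) (b : bool) :
  evalf (framed_theta n d Th kappa C) (dim_sub (hatU (n:=n) U b)) =
  C%:Z * evalf Th (dim_sub U) - evalf kappa (dim_sub U)
  + evalf kappa d * (b : nat)%:Z.
Proof. by rewrite evalf_framed; case: b; rewrite /dim_sub /= ?mxrank1 ?mxrank0. Qed.

Theorem lemma2p4 (R : realType) (Q : quiver) (d : dimvec Q)
  (Th : functional Q) (n : dimvec Q) (kappa : functional Q) (C : nat) :
  acyclic Q ->
  Th <> (fun _ => 0) ->
  evalf Th d = 0 ->
  n <> (fun _ => 0%N) ->
  positive_functional kappa ->
  (0 < C)%N ->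
  evalf kappa d < (C * gcdf Th)%:Z ->
  coprime_dimvec (framed_theta n d Th kappa C) (framed_dim n d) /\
  forall (V : rep R[i] d) (f : forall i : vertex Q, 'M[R[i]]_(n i, d i)),
    semistable (framed_theta n d Th kappa C) (framed_rep V f) <->
    (semistable Th V /\
     forall U : forall i, 'M[R[i]]_(d i),
       subrep V U ->
       (forall i, (f i <= U i)%MS) ->
       (exists i, \rank (U i) <> d i) ->
       evalf Th (dim_sub U) < 0).
Proof.
move=> _ _ HThd _ Hk HC Hkd.
have kd0 : 0 <= evalf kappa d := kappa_ge0 d Hk.
have TC : forall e : dimvec Q,
    (0 < evalf Th e -> (C * gcdf Th)%:Z <= C%:Z * evalf Th e) /\
    (evalf Th e < 0 -> C%:Z * evalf Th e <= - (C * gcdf Th)%:Z) /\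
    (evalf Th e = 0 -> C%:Z * evalf Th e = 0).
  move=> e; split; last split; last by move=> ->; rewrite mulr0.
  - move=> Ht; have := gcd_le (lt0r_neq0 Ht); nia.
  - move=> Ht; have := gcd_le (ltr0_neq0 Ht); nia.
split.
- move=> e Hne Hle Hned.
  rewrite evalf_framed.
  set e' := fun j => e (Some j).
  have Hle' : forall j, (e' j <= d j)%N := fun j => Hle (Some j).
  have Hsp := kappa_split kappa Hle'.
  have kge := kappa_ge0 e' Hk.
  have kdiff := kappa_ge0 (fun i => d i - e' i)%N Hk.
  have [T1 [T2 T0]] := TC e'.
  have eN : (e None <= 1)%N := Hle None.
  have [o Ho] : exists o, e o <> 0%N.
    case: (boolP [exists o, e o != 0%N]) => [/existsP [x /eqP Hx]|]; first by exists x.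
    rewrite negb_exists => /forallP H; exfalso; apply: Hne.
    apply: functional_extensionality => x; exact: (eqP (negbNE (H x))).
  have [o' Ho'] : exists o, e o <> framed_dim n d o.
    case: (boolP [exists o, e o != framed_dim n d o]) => [/existsP [x /eqP Hx]|]; first by exists x.
    rewrite negb_exists => /forallP H; exfalso; apply: Hned.
    apply: functional_extensionality => x; exact: (eqP (negbNE (H x))).
  move: T1 T2 T0 Hsp kge kdiff.
  set t := evalf Th e'; set ct := C%:Z * t; clearbody ct.
  have [HN|HN] : e None = 0%N \/ e None = 1%N by lia.
  + have kp : 0 < evalf kappa e'.
      apply: kappa_pos => //; case: o Ho => [j|] Ho; first by exists j.
      by rewrite HN in Ho.
    rewrite HN => T1 T2 T0 Hsp kge kdiff; apply/eqP; lia.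
  + have kp : 0 < evalf kappa (fun i => d i - e' i)%N.
      apply: kappa_pos => //; case: o' Ho' => [j|] Ho'; last by rewrite HN in Ho'.
      exists j; move: (Hle' j); rewrite /e'; move: Ho' => /=; lia.
    rewrite HN => T1 T2 T0 Hsp kge kdiff; apply/eqP; lia.
- move=> V f; split.
  + move=> Hs; split.
    * move=> U HU.
      have := Hs _ (@subrep_hat _ _ n d V f U false HU (fun H => False_ind _ (notF H))).
      rewrite evalf_hat.
      have Hle' : forall j, (dim_sub U j <= d j)%N by move=> j; exact: rank_leq_row.
      have Hsp := kappa_split kappa Hle'.
      have kge := kappa_ge0 (dim_sub U) Hk.
      have kdiff := kappa_ge0 (fun i => d i - dim_sub U i)%N Hk.
      have [T1 [T2 T0]] := TC (dim_sub U).
      move: T1 T2 T0 Hsp kge kdiff.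
      set t := evalf Th (dim_sub U); set ct := C%:Z * t; clearbody ct.
      set kU := evalf kappa (dim_sub U).
      move=> T1 T2 T0 Hsp kge kdiff H; lia.
    * move=> U HU Hf [i0 Hi0].
      have := Hs _ (@subrep_hat _ _ n d V f U true HU (fun _ => Hf)).
      rewrite evalf_hat.
      have Hle' : forall j, (dim_sub U j <= d j)%N by move=> j; exact: rank_leq_row.
      have Hsp := kappa_split kappa Hle'.
      have kge := kappa_ge0 (dim_sub U) Hk.
      have kp : 0 < evalf kappa (fun i => d i - dim_sub U i)%N.
        apply: kappa_pos => //; exists i0; move: (Hle' i0) Hi0; rewrite /dim_sub; lia.
      have [T1 [T2 T0]] := TC (dim_sub U).
      move: T1 T2 T0 Hsp kge kp.
      set t := evalf Th (dim_sub U); set ct := C%:Z * t; clearbody ct.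
      set kU := evalf kappa (dim_sub U).
      have E1 : ((true:nat)%:Z) = 1 by [].
      rewrite E1 mulr1 => T1 T2 T0 Hsp kge kp H; clear E1.
      lia.
  + move=> [Hss Hprop] Uh HUh.
    rewrite evalf_framed.
    pose U := (fun j => Uh (Some j)) : forall j, 'M[R[i]]_(d j).
    change (fun j => dim_sub Uh (Some j)) with (dim_sub U).
    have HU : subrep V U by move=> a; exact: (HUh (inl a)).
    have Hle' : forall j, (dim_sub U j <= d j)%N by move=> j; exact: rank_leq_row.
    have Hsp := kappa_split kappa Hle'.
    have kge := kappa_ge0 (dim_sub U) Hk.
    have kdiff := kappa_ge0 (fun i => d i - dim_sub U i)%N Hk.
    have [T1 [T2 T0]] := TC (dim_sub U).
    have Hr : (dim_sub Uh None <= 1)%N by exact: rank_leq_row.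
    have [HN|HN] : dim_sub Uh None = 0%N \/ dim_sub Uh None = 1%N by lia.
    * have := Hss U HU.
      move: T1 T2 T0 Hsp kge kdiff; rewrite HN.
      set t := evalf Th (dim_sub U); set ct := C%:Z * t; clearbody ct.
      set kU := evalf kappa (dim_sub U).
      move=> T1 T2 T0 Hsp kge kdiff H; lia.
    * have Hf : forall i, (f i <= U i)%MS.
        move=> i; apply/row_subP => k.
        have := HUh (inr (existT _ i k)); rewrite /= (mx11_scalar (Uh None)).
        rewrite mul_scalar_mx => H.
        have c0 : Uh None 0 0 != 0.
          apply/eqP => c0; move: HN; rewrite /dim_sub (mx11_scalar (Uh None)) c0.
          by rewrite raddf0 mxrank0.
        have := scalemx_sub (Uh None 0 0)^-1 H.
        by rewrite scalerA mulVf // scale1r.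
      case: (boolP [forall j, dim_sub U j == d j]) => [/forallP Hall|].
      - have Et : evalf Th (dim_sub U) = 0.
          rewrite -HThd /evalf; apply: eq_bigr => j _; by rewrite (eqP (Hall j)).
        have Ek : evalf kappa (dim_sub U) = evalf kappa d.
          rewrite /evalf; apply: eq_bigr => j _; by rewrite (eqP (Hall j)).
        rewrite Et Ek HN mulr0; lia.
      - rewrite negb_forall => /existsP [i0 /eqP Hi0].
        have := Hprop U HU Hf (ex_intro _ i0 Hi0).
        move: T1 T2 T0 Hsp kge kdiff; rewrite HN.
        set t := evalf Th (dim_sub U); set ct := C%:Z * t; clearbody ct.
        move=> T1 T2 T0 Hsp kge kdiff H; lia.
Qed.
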